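(* Let $K$ be the knot $6_2=K(11,3)$. For every $r\in(-4,0]\cap\mathbb{Q}$, the fundamental group $\pi_1(S^3_r(K))$ admits a non-abelian representation into $SL(2,\mathbb{R})$.
   Context: $S^3_r(K)$ denotes Dehn surgery on $K$ with slope $r$. *)

(* Defs.v *)
From HB Require Import structures.
From mathcomp Require Import all_boot all_order all_algebra.
From Stdlib Require Import Rdefinitions.
From mathcomp Require Import Rstruct.
Set Implicit Arguments. Unset Strict Implicit. Unset Printing Implicit Defensive.
Import Order.TTheory GRing.Theory Num.Theory.
Local Open Scope ring_scope.

(* Riley's presentation:
     pi_1(S^3 - K) = < a, b | w a = b w >,
   w = a^{e1} b^{e2} ... a^{e9} b^{e10},  e_i = (-1)^{floor(3 i / 11)},
   so (e_1..e_10) = (+,+,+,-,-,-,-,+,+,+) and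
     w = a b a b^-1 a^-1 b^-1 a^-1 b a b.
   The meridian is a, and the preferred longitude is
     lambda = w* w a^{-2 sigma},  sigma = sum e_i = 2,
   where w* is w written backwards.  Then
     pi_1(S^3_{m/n}(K)) = < a, b | w a = b w, a^m lambda^n = 1 >. *)



Definition in_SL2 (A : 'M[Rdefinitions.R]_2) : Prop := \det A = 1.

Definition word_w (A B : 'M[Rdefinitions.R]_2) : 'M[Rdefinitions.R]_2 :=
  A * B * A * B^-1 * A^-1 * B^-1 * A^-1 * B * A * B.

Definition word_wstar (A B : 'M[Rdefinitions.R]_2) : 'M[Rdefinitions.R]_2 :=
  B * A * B * A^-1 * B^-1 * A^-1 * B^-1 * A * B * A.

Definition longitude (A B : 'M[Rdefinitions.R]_2) : 'M[Rdefinitions.R]_2 :=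
  word_wstar A B * word_w A B * A ^- 4.

(* A homomorphism pi_1(S^3_r(K)) -> SL(2,R), r = m/n in lowest terms (n > 0),
   is determined by the images A, B of the generators a, b, which must
   lie in SL(2,R) and satisfy the defining relations. *)
Definition surgery_rep (r : rat) (A B : 'M[Rdefinitions.R]_2) : Prop :=
  [/\ in_SL2 A, in_SL2 B,
      word_w A B * A = B * word_w A B &
      A ^ (numq r) * longitude A B ^ (denq r) = 1].

(* A representation is non-abelian iff its image (generated by A, B)
   is non-abelian, i.e. iff A and B do not commute. *)
Definition nonabelian_rep (A B : 'M[Rdefinitions.R]_2) : Prop := A * B != B * A.

(* Main.v *)
Require Import Defs.
From HB Require Import structures.
From mathcomp Require Import all_boot all_order all_algebra.
From Stdlib Require Import Rdefinitions.
From mathcomp Require Import Rstruct.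
Import Order.TTheory GRing.Theory Num.Theory.
Local Open Scope ring_scope.

From Stdlib Require Import Reals Lra List.
Import ListNotations.
Local Open Scope R_scope.

Fixpoint hor (cs : list R) (x : R) : R :=
  match cs with nil => 0 | c :: r => c + x * hor r x end.
Fixpoint hor2 (css : list (list R)) (x y : R) : R :=
  match css with nil => 0 | cs :: r => hor cs y + x * hor2 r x y end.
Fixpoint hor3 (c3 : list (list (list R))) (x y z : R) : R :=
  match c3 with nil => 0 | css :: r => hor2 css y z + x * hor3 r x y z end.

Fixpoint bernF {A : Type} (f : A -> R) (cs : list A) (y : R) : R :=
  match cs with nil => 0 | c :: r => f c * (1 - y) ^ length r + y * bernF f r y end.
Fixpoint allF {A : Type} (P : A -> Prop) (cs : list A) : Prop :=
  match cs with nil => False | c :: nil => P c | c :: r => P c /\ allF P r end.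

Lemma bernF_pos {A : Type} (f : A -> R) (P : A -> Prop) cs y :
  (forall c, P c -> 0 < f c) -> allF P cs -> 0 <= y <= 1 -> 0 < bernF f cs y.
Proof.
  intros Hf. induction cs as [|c r IH]; intros HF Hy; [contradiction|].
  destruct r as [|c' r'].
  - simpl in *. specialize (Hf c HF). rewrite Rmult_1_r Rmult_0_r Rplus_0_r. exact Hf.
  - destruct HF as [Hc HF]. specialize (IH HF Hy). specialize (Hf c Hc).
    change (0 < f c * (1 - y) ^ length (c' :: r') + y * bernF f (c' :: r') y).
    set (b := bernF f (c' :: r') y) in *.
    assert (Hp : 0 <= (1 - y) ^ length (c' :: r')) by (apply pow_le; lra).
    destruct (Rle_lt_or_eq_dec 0 y (proj1 Hy)) as [Hy0|Hy0].
    + assert (0 < y * b) by (apply Rmult_lt_0_compat; lra).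
      assert (0 <= f c * (1 - y) ^ length (c' :: r')) by (apply Rmult_le_pos; [lra | exact Hp]).
      lra.
    + subst y. rewrite Rminus_0_r pow1. lra.
Qed.

Definition bern1 (cs : list R) y := bernF (fun c => c) cs y.
Definition bern2 (css : list (list R)) x y := bernF (fun cs => bern1 cs y) css x.
Definition bern3 (c3 : list (list (list R))) x y z := bernF (fun css => bern2 css y z) c3 x.

Lemma bern1_pos cs y : allF (fun c => 0 < c) cs -> 0 <= y <= 1 -> 0 < bern1 cs y.
Proof. intros; eapply bernF_pos; eauto. Qed.
Lemma bern2_pos css x y : allF (allF (fun c => 0 < c)) css -> 0 <= x <= 1 -> 0 <= y <= 1 -> 0 < bern2 css x y.
Proof. intros; eapply bernF_pos; eauto. intros; apply bern1_pos; auto. Qed.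
Lemma bern3_pos c3 x y z : allF (allF (allF (fun c => 0 < c))) c3 -> 0 <= x <= 1 -> 0 <= y <= 1 -> 0 <= z <= 1 -> 0 < bern3 c3 x y z.
Proof. intros; eapply bernF_pos; eauto. intros; apply bern2_pos; auto. Qed.

Definition PeC : list (list R) := [[(-1); (-1); (0); (0); (0); (0)]; [(3); (3); (0); (0); (0); (0)]; [(-3); (-6); (0); (0); (0); (0)]; [(3); (11); (4); (0); (0); (0)]; [(-1); (-13); (-9); (0); (0); (0)]; [(0); (11); (16); (0); (0); (0)]; [(0); (-6); (-19); (-6); (0); (0)]; [(0); (3); (16); (9); (0); (0)]; [(0); (-1); (-9); (-14); (0); (0)]; [(0); (0); (4); (9); (4); (0)]; [(0); (0); (0); (-6); (-3); (0)]; [(0); (0); (0); (0); (4); (0)]; [(0); (0); (0); (0); (0); (-1)]].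
Definition HeC : list (list R) := [[(1); (0); (0); (0)]; [(-2); (0); (0); (0)]; [(1); (0); (0); (0)]; [(0); (-3); (0); (0)]; [(-2); (4); (0); (0)]; [(1); (-1); (0); (0)]; [(0); (-2); (3); (0)]; [(0); (3); (-2); (0)]; [(0); (-2); (-1); (0)]; [(0); (1); (2); (-1)]; [(0); (0); (-2); (0)]; [(0); (0); (0); (1)]].
Definition DC : list (list (list R)) := [[[(-1); (0); (0); (0); (0)]; [(0); (0); (0); (0); (0)]; [(0); (0); (0); (0); (0)]; [(0); (0); (0); (0); (0)]; [(0); (0); (0); (0); (0)]]; [[(3); (0); (0); (0); (0)]; [(0); (0); (0); (0); (0)]; [(0); (0); (0); (0); (0)]; [(0); (0); (0); (0); (0)]; [(0); (0); (0); (0); (0)]]; [[(-6); (0); (0); (0); (0)]; [(0); (0); (0); (0); (0)]; [(0); (0); (0); (0); (0)]; [(0); (0); (0); (0); (0)]; [(0); (0); (0); (0); (0)]]; [[(11); (4); (0); (0); (0)]; [(4); (0); (0); (0); (0)]; [(0); (0); (0); (0); (0)]; [(0); (0); (0); (0); (0)]; [(0); (0); (0); (0); (0)]]; [[(-13); (-9); (0); (0); (0)]; [(-9); (0); (0); (0); (0)]; [(0); (0); (0); (0); (0)]; [(0); (0); (0); (0); (0)]; [(0); (0); (0); (0); (0)]]; [[(11); (16); (0); (0); (0)]; [(16); (0); (0); (0); (0)]; [(0); (0); (0); (0); (0)]; [(0); (0); (0); (0); (0)]; [(0); (0); (0); (0); (0)]]; [[(-6); (-19); (-6); (0); (0)];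 [(-19); (-6); (0); (0); (0)]; [(-6); (0); (0); (0); (0)]; [(0); (0); (0); (0); (0)]; [(0); (0); (0); (0); (0)]]; [[(3); (16); (9); (0); (0)]; [(16); (9); (0); (0); (0)]; [(9); (0); (0); (0); (0)]; [(0); (0); (0); (0); (0)]; [(0); (0); (0); (0); (0)]]; [[(-1); (-9); (-14); (0); (0)]; [(-9); (-14); (0); (0); (0)]; [(-14); (0); (0); (0); (0)]; [(0); (0); (0); (0); (0)]; [(0); (0); (0); (0); (0)]]; [[(0); (4); (9); (4); (0)]; [(4); (9); (4); (0); (0)]; [(9); (4); (0); (0); (0)]; [(4); (0); (0); (0); (0)]; [(0); (0); (0); (0); (0)]]; [[(0); (0); (-6); (-3); (0)]; [(0); (-6); (-3); (0); (0)]; [(-6); (-3); (0); (0); (0)]; [(-3); (0); (0); (0); (0)]; [(0); (0); (0); (0); (0)]]; [[(0); (0); (0); (4); (0)]; [(0); (0); (4); (0); (0)]; [(0); (4); (0); (0); (0)]; [(4); (0); (0); (0); (0)]; [(0); (0); (0); (0); (0)]]; [[(0); (0); (0); (0); (-1)]; [(0); (0); (0); (-1); (0)]; [(0); (0); (-1); (0); (0)]; [(0); (-1); (0); (0); (0)]; [(-1); (0); (0); (0); (0)]]].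
Definition Pe_S E v := hor2 PeC E v.
Definition He_S E v := hor2 HeC E v.
Definition D_S E v1 v2 := hor3 DC E v1 v2.

Definition E0 : R := 2500/5329.
Definition V1 : R := -6/5.
Definition V2 : R := 1/5.

Lemma Pe_diff E v1 v2 : Pe_S E v1 - Pe_S E v2 = (v1 - v2) * D_S E v1 v2.
Proof. unfold Pe_S, D_S, PeC, DC. cbn [hor hor2 hor3]. ring. Qed.

Definition C1 : list R := [(1/5); (56448/26645); (1565891406/141991205); (5645338574216/151334226289); (72666518397236519/806460091894081); (3455082209251617183008/21488129148517788245); (24510747016150291858160404/114510240232451293557605); (129410254408822418328571498928/610225070198732943368477045); (100426167744055441284504195666539/650377879817809571042122834561); (278887723127944435276099303052677536/3465863721549107204083472585375569); (2634870408611088867613451013413766912766/92347938860675961452804127037332036005); (3056602640304188392403571104575995651107048/492122166188542198581993192981942419870645); (1663981535604156214161495561910063862048415941/2622519023618741376243441725400771155490667205)].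
Definition C2 : list R := [(6/5); (338688/26645); (8739098436/141991205); (27210218945296/151334226289); (283989344477169114/806460091894081); (10433382627850953098048/21488129148517788245); (55091910052320063336462424/114510240232451293557605); (209219497250154499993053993568/610225070198732943368477045); (112199572303955742816207611499234/650377879817809571042122834561); (203179932423867717532005906566065216/3465863721549107204083472585375569); (1132626431771606347588468101003070226596/92347938860675961452804127037332036005); (624592952630438811358935280204014844142288/492122166188542198581993192981942419870645); (66954467831398493252348955075819721634245646/2622519023618741376243441725400771155490667205)].
Definition C3 : list (list (list R)) := [[[(1); (4); (6); (4); (1)]; [(4); (16); (24); (16); (4)]; [(6); (24); (36); (24); (6)]; [(4); (16); (24); (16); (4)]; [(1); (4); (6); (4); (1)]]; [[(56448/5329); (225792/5329); (338688/5329); (225792/5329); (56448/5329)]; [(225792/5329); (903168/5329); (1354752/5329); (903168/5329); (225792/5329)]; [(338688/5329); (1354752/5329); (2032128/5329); (1354752/5329); (338688/5329)]; [(225792/5329); (903168/5329); (1354752/5329); (903168/5329); (225792/5329)]; [(56448/5329); (225792/5329); (338688/5329); (225792/5329); (56448/5329)]]; [[(1472141406/28398241); (5888565624/28398241); (8832848436/28398241); (5888565624/28398241); (1472141406/28398241)]; [(5888565624/28398241); (23554262496/28398241); (35331393744/28398241); (23554262496/28398241); (5888565624/28398241)]; [(8832848436/28398241); (35331393744/28398241); (52997090616/28398241); (35331393744/28398241); (8832848436/28398241)]; [(5888565624/28398241); (23554262496/28398241); (35331393744/28398241); (23554262496/28398241); (5888565624/28398241)]; [(1472141406/28398241); (5888565624/28398241);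 (8832848436/28398241); (5888565624/28398241); (1472141406/28398241)]]; [[(23555755371080/151334226289); (94135521484320/151334226289); (141072032226480/151334226289); (93960521484320/151334226289); (23468255371080/151334226289)]; [(94135521484320/151334226289); (376192085937280/151334226289); (563763128905920/151334226289); (375492085937280/151334226289); (93785521484320/151334226289)]; [(141072032226480/151334226289); (563763128905920/151334226289); (844857193358880/151334226289); (562713128905920/151334226289); (140547032226480/151334226289)]; [(93960521484320/151334226289); (375492085937280/151334226289); (562713128905920/151334226289); (374792085937280/151334226289); (93610521484320/151334226289)]; [(23468255371080/151334226289); (93785521484320/151334226289); (140547032226480/151334226289); (93610521484320/151334226289); (23380755371080/151334226289)]]; [[(258458587767432595/806460091894081); (1030129951069730380/806460091894081); (1539638326604595570/806460091894081); (1022721151069730380/806460091894081); (254754187767432595/806460091894081)]; [(1030129951069730380/806460091894081); (4105702204278921520/806460091894081); (6136326906418382280/806460091894081); (4076067004278921520/806460091894081); (1015312351069730380/806460091894081)]; [(1539638326604595570/806460091894081); (6136326906418382280/806460091894081); (9171150759627573420/806460091894081); (6091874106418382280/806460091894081); (1517411926604595570/806460091894081)]; [(1022721151069730380/806460091894081); (4076067004278921520/806460091894081); (6091874106418382280/806460091894081); (4046431804278921520/806460091894081); (1007903551069730380/806460091894081)]; [(254754187767432595/806460091894081); (1015312351069730380/806460091894081); (1517411926604595570/806460091894081); (1007903551069730380/806460091894081); (251049787767432595/806460091894081)]]; [[(2054725426950367183008/4297625829703557649); (8148242686151468732032/4297625829703557649); (12116375496752203098048/4297625829703557649); (8006924642851468732032/4297625829703557649);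 (1984066405300367183008/4297625829703557649)]; [(8148242686151468732032/4297625829703557649); (32310334658005874928128/4297625829703557649); (48041547857108812392192/4297625829703557649); (31745062484805874928128/4297625829703557649); (7865606599551468732032/4297625829703557649)]; [(12116375496752203098048/4297625829703557649); (48041547857108812392192/4297625829703557649); (71426390590813218588288/4297625829703557649); (47193639597308812392192/4297625829703557649); (11692421366852203098048/4297625829703557649)]; [(8006924642851468732032/4297625829703557649); (31745062484805874928128/4297625829703557649); (47193639597308812392192/4297625829703557649); (31179790311605874928128/4297625829703557649); (7724288556251468732032/4297625829703557649)]; [(1984066405300367183008/4297625829703557649); (7865606599551468732032/4297625829703557649); (11692421366852203098048/4297625829703557649); (7724288556251468732032/4297625829703557649); (1913407383650367183008/4297625829703557649)]]; [[(12172369347706522170660404/22902048046490258711521); (47886045102008188682641616/22902048046490258711521); (70626790313535433023962424/22902048046490258711521); (46284922711872388682641616/22902048046490258711521); (11371808152638622170660404/22902048046490258711521)]; [(47886045102008188682641616/22902048046490258711521); (188333322346511154730566464/22902048046490258711521); (277695180802484332095849696/22902048046490258711521); (181934574973467954730566464/22902048046490258711521); (44686671415486588682641616/22902048046490258711521)]; [(70626790313535433023962424/22902048046490258711521); (277695180802484332095849696/22902048046490258711521); (409342027088740398143774544/22902048046490258711521); (268105673024169532095849696/22902048046490258711521); (65832036424378033023962424/22902048046490258711521)]; [(46284922711872388682641616/22902048046490258711521); (181934574973467954730566464/22902048046490258711521); (268105673024169532095849696/22902048046490258711521); (175547311975424754730566464/22902048046490258711521); (43091291212850788682641616/22902048046490258711521)];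 [(11371808152638622170660404/22902048046490258711521); (44686671415486588682641616/22902048046490258711521); (65832036424378033023962424/22902048046490258711521); (43091291212850788682641616/22902048046490258711521); (10574118051320722170660404/22902048046490258711521)]]; [[(54333662878060704570946498928/122045014039746588673695409); (211295633692607387758785995712/122045014039746588673695409); (307965957559457935850678993568/122045014039746588673695409); (199379665553336526708785995712/122045014039746588673695409); (48375678808425274045946498928/122045014039746588673695409)]; [(211295633692607387758785995712/122045014039746588673695409); (821107497241887828935143982848/122045014039746588673695409); (1195872824570019160252715974272/122045014039746588673695409); (773605692184804384735143982848/122045014039746588673695409); (187544731164065665658785995712/122045014039746588673695409)]; [(307965957559457935850678993568/122045014039746588673695409); (1195872824570019160252715974272/122045014039746588673695409); (1740308930853309865654073961408/122045014039746588673695409); (1124863218234393993952715974272/122045014039746588673695409); (272461154391645352700678993568/122045014039746588673695409)]; [(199379665553336526708785995712/122045014039746588673695409); (773605692184804384735143982848/122045014039746588673695409); (1124863218234393993952715974272/122045014039746588673695409); (726428022127720940535143982848/122045014039746588673695409); (175790830524794804608785995712/122045014039746588673695409)]; [(48375678808425274045946498928/122045014039746588673695409); (187544731164065665658785995712/122045014039746588673695409); (272461154391645352700678993568/122045014039746588673695409); (175790830524794804608785995712/122045014039746588673695409); (42498728488789843520946498928/122045014039746588673695409)]]; [[(182173901948110659859751290832695/650377879817809571042122834561); (697419230247808160186905163330780/650377879817809571042122834561); (1000192283257006615152207744996170/650377879817809571042122834561); (636822483563031389182705163330780/650377879817809571042122834561); (151875528605722274357651290832695/650377879817809571042122834561)];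 [(697419230247808160186905163330780/650377879817809571042122834561); (2665549415014940817489220653323120/650377879817809571042122834561); (3816044880366957866346230979984680/650377879817809571042122834561); (2425118436680325920972420653323120/650377879817809571042122834561); (577203741080500711928505163330780/650377879817809571042122834561)]; [(1000192283257006615152207744996170/650377879817809571042122834561); (3816044880366957866346230979984680/650377879817809571042122834561); (5452848966772310470625446469977020/650377879817809571042122834561); (3458332425471773802821030979984680/650377879817809571042122834561); (821336055809414583389607744996170/650377879817809571042122834561)]; [(636822483563031389182705163330780/650377879817809571042122834561); (2425118436680325920972420653323120/650377879817809571042122834561); (3458332425471773802821030979984680/650377879817809571042122834561); (2188599475154695399455620653323120/650377879817809571042122834561); (518563002800216128424305163330780/650377879817809571042122834561)]; [(151875528605722274357651290832695/650377879817809571042122834561); (577203741080500711928505163330780/650377879817809571042122834561); (821336055809414583389607744996170/650377879817809571042122834561); (518563002800216128424305163330780/650377879817809571042122834561); (122555159465579982605551290832695/650377879817809571042122834561)]]; [[(450024292222310767263477714013387680/3465863721549107204083472585375569); (1687847650052322343974794006053550720/3465863721549107204083472585375569); (2369998333234765709593515734080326080/3465863721549107204083472585375569); (1476509015084619956316560306053550720/3465863721549107204083472585375569); (344334039679865823434360864013387680/3465863721549107204083472585375569)]; [(1687847650052322343974794006053550720/3465863721549107204083472585375569); (6308993661273269756832708624214202880/3465863721549107204083472585375569); (8826257759035340831649361836321304320/3465863721549107204083472585375569); (5476757653991411768699773824214202880/3465863721549107204083472585375569); (1271645906177018349908326606053550720/3465863721549107204083472585375569)]; [(2369998333234765709593515734080326080/3465863721549107204083472585375569);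 (8826257759035340831649361836321304320/3465863721549107204083472585375569); (12298264485815845424886991104481956480/3465863721549107204083472585375569); (7597497806761606193199959636321304320/3465863721549107204083472585375569); (1755492746746335890368814634080326080/3465863721549107204083472585375569)]; [(1476509015084619956316560306053550720/3465863721549107204083472585375569); (5476757653991411768699773824214202880/3465863721549107204083472585375569); (7597497806761606193199959636321304320/3465863721549107204083472585375569); (4670591231418706905566839024214202880/3465863721549107204083472585375569); (1073342063563892524750092906053550720/3465863721549107204083472585375569)]; [(344334039679865823434360864013387680/3465863721549107204083472585375569); (1271645906177018349908326606053550720/3465863721549107204083472585375569); (1755492746746335890368814634080326080/3465863721549107204083472585375569); (1073342063563892524750092906053550720/3465863721549107204083472585375569); (245161183314709160855244014013387680/3465863721549107204083472585375569)]]; [[(783495803284606125321107434159548162766/18469587772135192290560825407466407201); (2862657893966989810905672354538192651064/18469587772135192290560825407466407201); (3913633083514296276591153708657288976596/18469587772135192290560825407466407201); (2372684827172297621749720090338192651064/18469587772135192290560825407466407201); (538213834340385030743131302059548162766/18469587772135192290560825407466407201)]; [(2862657893966989810905672354538192651064/18469587772135192290560825407466407201); (10391964520503184077908441139752770604256/18469587772135192290560825407466407201); (14105892211897717751494414292029155906384/18469587772135192290560825407466407201); (8484158953778842512886194582952770604256/18469587772135192290560825407466407201); (1907573368417319028394549076138192651064/18469587772135192290560825407466407201)]; [(3913633083514296276591153708657288976596/18469587772135192290560825407466407201); (14105892211897717751494414292029155906384/18469587772135192290560825407466407201); (18993910849251907169741008124143733859576/18469587772135192290560825407466407201); (11321132170305346191363388206829155906384/18469587772135192290560825407466407201);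 (2519480449436860496525640666057288976596/18469587772135192290560825407466407201)]; [(2372684827172297621749720090338192651064/18469587772135192290560825407466407201); (8484158953778842512886194582952770604256/18469587772135192290560825407466407201); (11321132170305346191363388206829155906384/18469587772135192290560825407466407201); (6678163303588355331067073026152770604256/18469587772135192290560825407466407201); (1468505259889554030840159311938192651064/18469587772135192290560825407466407201)]; [(538213834340385030743131302059548162766/18469587772135192290560825407466407201); (1907573368417319028394549076138192651064/18469587772135192290560825407466407201); (2519480449436860496525640666057288976596/18469587772135192290560825407466407201); (1468505259889554030840159311938192651064/18469587772135192290560825407466407201); (318384344529627531965936419959548162766/18469587772135192290560825407466407201)]]; [[(872784684864658872655246547283574713607048/98424433237708439716398638596388483974129); (3085545529437322490458664661105011354428192/98424433237708439716398638596388483974129); (4081614168299457879783733449613585781642288/98424433237708439716398638596388483974129); (2394738408431741005374959105046436354428192/98424433237708439716398638596388483974129); (525885084704946743394643769254287213607048/98424433237708439716398638596388483974129)]; [(3085545529437322490458664661105011354428192/98424433237708439716398638596388483974129); (10781494966839481605524591282302895417712768/98424433237708439716398638596388483974129); (14074962401282441677741160880278618126569152/98424433237708439716398638596388483974129); (8135653702540357406993206558068595417712768/98424433237708439716398638596388483974129); (1756640738660074844317972298987861354428192/98424433237708439716398638596388483974129)]; [(4081614168299457879783733449613585781642288/98424433237708439716398638596388483974129); (14074962401282441677741160880278618126569152/98424433237708439716398638596388483974129); (18096340091161711300243894443154339689853728/98424433237708439716398638596388483974129); (10276297175790872445774240043927168126569152/98424433237708439716398638596388483974129); (2173305317612144943487773031437860781642288/98424433237708439716398638596388483974129)];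 [(2394738408431741005374959105046436354428192/98424433237708439716398638596388483974129); (8135653702540357406993206558068595417712768/98424433237708439716398638596388483974129); (10276297175790872445774240043927168126569152/98424433237708439716398638596388483974129); (5712618560432265598318696833834295417712768/98424433237708439716398638596388483974129); (1177236678750009554162704242929286354428192/98424433237708439716398638596388483974129)]; [(525885084704946743394643769254287213607048/98424433237708439716398638596388483974129); (1756640738660074844317972298987861354428192/98424433237708439716398638596388483974129); (2173305317612144943487773031437860781642288/98424433237708439716398638596388483974129); (1177236678750009554162704242929286354428192/98424433237708439716398638596388483974129); (234687015092992711598259741224999713607048/98424433237708439716398638596388483974129)]]; [[(479243570708953695877675367428835611954665941/524503804723748275248688345080154231098133441); (1624465504516554703885153558396097347818663764/524503804723748275248688345080154231098133441); (2064730695226248288104883802646528371727995646/524503804723748275248688345080154231098133441); (1166556356134643097674383399820107147818663764/524503804723748275248688345080154231098133441); (247276571919364958201977788140840511954665941/524503804723748275248688345080154231098133441)]; [(1624465504516554703885153558396097347818663764/524503804723748275248688345080154231098133441); (5394622510719484848753897920338658991274655056/524503804723748275248688345080154231098133441); (6697774125176347579422048738764392886911982584/524503804723748275248688345080154231098133441); (3683840499047811967185517950097198191274655056/524503804723748275248688345080154231098133441); (757139288887871095132213573275366947818663764/524503804723748275248688345080154231098133441)]; [(2064730695226248288104883802646528371727995646/524503804723748275248688345080154231098133441); (6697774125176347579422048738764392886911982584/524503804723748275248688345080154231098133441); (8086492406144747809382820392601508430367973876/524503804723748275248688345080154231098133441); (4300375327651528552450279779495951686911982584/524503804723748275248688345080154231098133441);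 (848300214677094878134624323012307771727995646/524503804723748275248688345080154231098133441)]; [(1166556356134643097674383399820107147818663764/524503804723748275248688345080154231098133441); (3683840499047811967185517950097198191274655056/524503804723748275248688345080154231098133441); (4300375327651528552450279779495951686911982584/524503804723748275248688345080154231098133441); (2190210299892284414354039307980737391274655056/524503804723748275248688345080154231098133441); (408035023967401293914894078761876747818663764/524503804723748275248688345080154231098133441)]; [(247276571919364958201977788140840511954665941/524503804723748275248688345080154231098133441); (757139288887871095132213573275366947818663764/524503804723748275248688345080154231098133441); (848300214677094878134624323012307771727995646/524503804723748275248688345080154231098133441); (408035023967401293914894078761876747818663764/524503804723748275248688345080154231098133441); (69826503462181693335505540884095411954665941/524503804723748275248688345080154231098133441)]]].
Definition C4 : list R := [(53346504766847351/4297625829703557649); (232091158936427221567559137288293/3465863721549107204083472585375569); (1770470176318031987443292101984313397/18469587772135192290560825407466407201); (4066275030110537021415331061827927030871/98424433237708439716398638596388483974129)].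
Definition C5 : list (list R) := [[(1/2); (3/2); (3/2); (1/2)]; [(5); (15); (15); (5)]; [(361/16); (1083/16); (1083/16); (361/16)]; [(9699/160); (58173/320); (7269/40); (19377/320)]; [(68911/640); (206411/640); (206089/640); (68589/640)]; [(679123/5120); (1014369/2560); (2020107/5120); (167623/1280)]; [(739083/6400); (17572771/51200); (34815247/102400); (11495033/102400)]; [(14524999/204800); (85567427/409600); (41993851/204800); (27470273/409600)]; [(6149759/204800); (71367779/819200); (137898803/1638400); (44361317/1638400)]; [(136208453/16384000); (770520377/32768000); (181052957/8192000); (113054007/16384000)]; [(22055181/16384000); (59723527/16384000); (213533087/65536000); (62858331/65536000)]; [(1253121/13107200); (6270339/26214400); (10106967/52428800); (5156517/104857600)]].
Lemma C1_id x : Pe_S (E0 * x) V1 = bern1 C1 x.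
Proof. unfold Pe_S, PeC, bern1, C1, E0, V1. cbn [hor hor2 bernF length]. field. Qed.
Lemma C2_id x : - Pe_S (E0 * x) V2 = bern1 C2 x.
Proof. unfold Pe_S, PeC, bern1, C2, E0, V2. cbn [hor hor2 bernF length]. field. Qed.
Lemma C3_id x y z : - D_S (E0 * x) (V1 + 7/5 * y) (V1 + 7/5 * z) = bern3 C3 x y z.
Proof. unfold D_S, DC, bern3, bern2, bern1, C3, E0, V1. cbn [hor hor2 hor3 bernF length]. field. Qed.
Lemma C4_id y : E0^2 - He_S E0 (1/5 * y) = bern1 C4 y.
Proof. unfold He_S, HeC, bern1, C4, E0. cbn [hor hor2 bernF length]. field. Qed.
Lemma C5_id x y : He_S (1/4 * x) (V1 + 7/5 * y) - 1/2 = bern2 C5 x y.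
Proof. unfold He_S, HeC, bern2, bern1, C5, V1. cbn [hor hor2 bernF length]. field. Qed.

Ltac allpos := cbn [allF]; repeat split; lra.

Lemma cert1 E : 0 <= E <= E0 -> 0 < Pe_S E V1.
Proof.
  intros HE. replace E with (E0 * (E * (5329/2500))) by (unfold E0; field).
  rewrite C1_id. apply bern1_pos; [unfold C1; allpos | unfold E0 in HE; lra].
Qed.
Lemma cert2 E : 0 <= E <= E0 -> Pe_S E V2 < 0.
Proof.
  intros HE. replace E with (E0 * (E * (5329/2500))) by (unfold E0; field).
  cut (0 < - Pe_S (E0 * (E * (5329 / 2500))) V2); [lra|].
  rewrite C2_id. apply bern1_pos; [unfold C2; allpos | unfold E0 in HE; lra].
Qed.
Lemma cert3 E v1 v2 : 0 <= E <= E0 -> V1 <= v1 <= V2 -> V1 <= v2 <= V2 -> D_S E v1 v2 < 0.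
Proof.
  intros HE H1 H2.
  replace E with (E0 * (E * (5329/2500))) by (unfold E0; field).
  replace v1 with (V1 + 7/5 * ((v1 - V1) * (5/7))) by field.
  replace v2 with (V1 + 7/5 * ((v2 - V1) * (5/7))) by field.
  cut (0 < - D_S (E0 * (E * (5329 / 2500))) (V1 + 7/5 * ((v1 - V1) * (5/7))) (V1 + 7/5 * ((v2 - V1) * (5/7)))); [lra|].
  rewrite C3_id. unfold E0, V1, V2 in *.
  apply bern3_pos; [unfold C3; allpos | lra | lra | lra].
Qed.
Lemma cert4a : 0 < Pe_S E0 0.
Proof.
  replace (Pe_S E0 0) with (6813961523419 / 806460091894081).
  - lra.
  - unfold Pe_S, PeC, E0. cbn [hor hor2]. field.
Qed.
Lemma cert4b v : 0 <= v <= V2 -> He_S E0 v < E0^2.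
Proof.
  intros Hv. replace v with (1/5 * (v * 5)) by field.
  cut (0 < E0^2 - He_S E0 (1/5 * (v * 5))); [lra|].
  rewrite C4_id. apply bern1_pos; [unfold C4; allpos | unfold V2 in Hv; lra].
Qed.
Lemma cert5 E v : 0 <= E <= 1/4 -> V1 <= v <= V2 -> 1/2 < He_S E v.
Proof.
  intros HE Hv. replace E with (1/4 * (E * 4)) by field.
  replace v with (V1 + 7/5 * ((v - V1) * (5/7))) by field.
  cut (0 < He_S (1/4 * (E * 4)) (V1 + 7/5 * ((v - V1) * (5/7))) - 1/2); [lra|].
  rewrite C5_id. unfold V1, V2 in *. apply bern2_pos; [unfold C5; allpos | lra | lra].
Qed.

Lemma Pe_mono E v1 v2 : 0 <= E <= E0 -> V1 <= v1 -> v1 < v2 -> v2 <= V2 -> Pe_S E v2 < Pe_S E v1.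
Proof.
  intros HE H1 H12 H2.
  assert (HD : D_S E v1 v2 < 0) by (apply cert3; lra).
  assert (Hd := Pe_diff E v1 v2).
  assert (0 < (v1 - v2) * D_S E v1 v2) by (apply Rmult_lt_0_compat_neg; lra) || nra.
  lra.
Qed.

Lemma cont_eps f x : continuity_pt f x -> forall eps, 0 < eps ->
  exists del, 0 < del /\ forall y, Rabs (y - x) < del -> Rabs (f y - f x) < eps.
Proof.
  intros H eps He. destruct (H eps He) as [del [Hd Hy]].
  exists del. split; [exact Hd|]. intros y Hyx.
  destruct (Req_dec x y) as [<-|Hne].
  - unfold Rminus. rewrite Rplus_opp_r Rabs_R0. exact He.
  - apply (Hy y). split; [split; [exact I | exact Hne] | exact Hyx].
Qed.

Lemma cont_from_eps f x : (forall eps, 0 < eps ->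
  exists del, 0 < del /\ forall y, Rabs (y - x) < del -> Rabs (f y - f x) < eps) ->
  continuity_pt f x.
Proof.
  intros H eps He. destruct (H eps He) as [del [Hd Hy]].
  exists del. split; [exact Hd|]. intros y [_ Hyx]. apply Hy. exact Hyx.
Qed.

Lemma lip_cont f x : (forall a b, Rabs (f a - f b) <= Rabs (a - b)) -> continuity_pt f x.
Proof.
  intros H. apply cont_from_eps. intros eps He. exists eps. split; [exact He|].
  intros y Hy. eapply Rle_lt_trans; [apply H | exact Hy].
Qed.

Lemma clamp_lip lo hi a b : lo <= hi ->
  Rabs (Rmax lo (Rmin a hi) - Rmax lo (Rmin b hi)) <= Rabs (a - b).
Proof.
  intros Hlh. unfold Rmax, Rmin, Rabs.
  repeat (destruct Rle_dec); repeat (destruct Rcase_abs); lra.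
Qed.

Lemma hor_cont cs f x : continuity_pt f x -> continuity_pt (fun z => hor cs (f z)) x.
Proof.
  intros Hf. induction cs as [|c r IH]; simpl.
  - apply continuity_pt_const. intros ? ?. reflexivity.
  - apply (continuity_pt_plus (fun _ => c) (fun z => f z * hor r (f z))).
    + apply continuity_pt_const. intros ? ?. reflexivity.
    + apply (continuity_pt_mult f (fun z => hor r (f z))); assumption.
Qed.

Lemma hor2_cont css f g x : continuity_pt f x -> continuity_pt g x ->
  continuity_pt (fun z => hor2 css (f z) (g z)) x.
Proof.
  intros Hf Hg. induction css as [|cs r IH]; simpl.
  - apply continuity_pt_const. intros ? ?. reflexivity.
  - apply (continuity_pt_plus (fun z => hor cs (g z)) (fun z => f z * hor2 r (f z) (g z))).
    + apply hor_cont; assumption.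
    + apply (continuity_pt_mult f (fun z => hor2 r (f z) (g z))); assumption.
Qed.

Lemma id_cont x : continuity_pt (fun z => z) x.
Proof. apply lip_cont. intros a b. apply Rle_refl. Qed.
Lemma const_cont (c : R) x : continuity_pt (fun _ => c) x.
Proof. apply continuity_pt_const. intros ? ?. reflexivity. Qed.

Lemma root_cont (f : R -> R -> R) (r : R -> R) (a b : R) :
  (forall x w1 w2, a <= w1 -> w1 < w2 -> w2 <= b -> f x w2 < f x w1) ->
  (forall x, a <= r x <= b /\ f x (r x) = 0) ->
  (forall w x, continuity_pt (fun x => f x w) x) ->
  (forall x, 0 < f x a) -> (forall x, f x b < 0) ->
  forall x, continuity_pt r x.
Proof.
  intros Hmono Hr Hc Ha Hb x.
  apply cont_from_eps. intros eps He.
  destruct (Hr x) as [[Hv1 Hv2] Hv0].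
  set (v := r x) in *.
  assert (Hav : a < v).
  { destruct (Rle_lt_or_eq_dec a v Hv1) as [H|H]; [exact H|].
    exfalso. specialize (Ha x). rewrite H in Ha. lra. }
  assert (Hvb : v < b).
  { destruct (Rle_lt_or_eq_dec v b Hv2) as [H|H]; [exact H|].
    exfalso. specialize (Hb x). rewrite -H in Hb. lra. }
  set (lo := Rmax a (v - eps/2)). set (hi := Rmin b (v + eps/2)).
  assert (Hlo1 : a <= lo) by apply Rmax_l.
  assert (Hlo2 : lo < v) by (unfold lo, Rmax; destruct Rle_dec; lra).
  assert (Hlo3 : v - eps/2 <= lo) by apply Rmax_r.
  assert (Hhi1 : hi <= b) by apply Rmin_l.
  assert (Hhi2 : v < hi) by (unfold hi, Rmin; destruct Rle_dec; lra).
  assert (Hhi3 : hi <= v + eps/2) by apply Rmin_r.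
  assert (Hflo : 0 < f x lo).
  { rewrite -Hv0. apply Hmono; lra. }
  assert (Hfhi : f x hi < 0).
  { rewrite -Hv0. apply Hmono; lra. }
  destruct (cont_eps _ _ (Hc lo x) (f x lo) Hflo) as [d1 [Hd1 H1]].
  destruct (cont_eps _ _ (Hc hi x) (- f x hi) ltac:(lra)) as [d2 [Hd2 H2]].
  exists (Rmin d1 d2). split; [apply Rmin_pos; assumption|].
  intros y Hy.
  assert (Hy1 : Rabs (y - x) < d1) by (eapply Rlt_le_trans; [exact Hy | apply Rmin_l]).
  assert (Hy2 : Rabs (y - x) < d2) by (eapply Rlt_le_trans; [exact Hy | apply Rmin_r]).
  specialize (H1 y Hy1). specialize (H2 y Hy2).
  assert (Fy1 : 0 < f y lo) by (unfold Rabs in H1; destruct Rcase_abs in H1; lra).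
  assert (Fy2 : f y hi < 0) by (unfold Rabs in H2; destruct Rcase_abs in H2; lra).
  destruct (Hr y) as [[Hw1 Hw2] Hw0].
  assert (Hl : lo < r y).
  { destruct (Rlt_le_dec lo (r y)) as [G|G]; [exact G|].
    exfalso. destruct (Rle_lt_or_eq_dec (r y) lo G) as [H'|H'].
    - assert (f y lo < f y (r y)) by (apply Hmono; lra). lra.
    - rewrite H' in Hw0. lra. }
  assert (Hh : r y < hi).
  { destruct (Rlt_le_dec (r y) hi) as [G|G]; [exact G|].
    exfalso. destruct (Rle_lt_or_eq_dec hi (r y) G) as [H'|H'].
    - assert (f y (r y) < f y hi) by (apply Hmono; lra). lra.
    - rewrite -H' in Hw0. lra. }
  fold v. unfold Rabs. destruct Rcase_abs; lra.
Qed.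

Definition clampE (E : R) : R := Rmax 0 (Rmin E E0).
Lemma E0_pos : 0 < E0. Proof. unfold E0; lra. Qed.
Lemma clampE_bounds E : 0 <= clampE E <= E0.
Proof. unfold clampE, Rmax, Rmin. pose proof E0_pos. repeat destruct Rle_dec; lra. Qed.
Lemma clampE_id E : 0 <= E <= E0 -> clampE E = E.
Proof. intros H. unfold clampE, Rmax, Rmin. repeat destruct Rle_dec; lra. Qed.
Lemma clampE_cont x : continuity_pt clampE x.
Proof. apply lip_cont. intros a b. apply clamp_lip. pose proof E0_pos; lra. Qed.

Lemma Pe_v_cont E : continuity (fun v => - Pe_S E v).
Proof.
  intros x. apply (continuity_pt_opp (fun v => Pe_S E v)).
  unfold Pe_S. apply (hor2_cont PeC (fun _ => E) (fun v => v)); [apply const_cont | apply id_cont].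
Qed.
Lemma V12 : V1 < V2. Proof. unfold V1, V2; lra. Qed.
Lemma root_neg E : - Pe_S (clampE E) V1 < 0.
Proof. pose proof (cert1 _ (clampE_bounds E)). lra. Qed.
Lemma root_pos E : 0 < - Pe_S (clampE E) V2.
Proof. pose proof (cert2 _ (clampE_bounds E)). lra. Qed.

Definition vroot (E : R) : R :=
  proj1_sig (IVT (fun v => - Pe_S (clampE E) v) V1 V2 (Pe_v_cont _) V12 (root_neg E) (root_pos E)).

Lemma vroot_spec E : V1 <= vroot E <= V2 /\ Pe_S (clampE E) (vroot E) = 0.
Proof.
  unfold vroot. destruct (IVT _ _ _ _ _ _ _) as [z [Hz Hz0]]. simpl. split; [exact Hz | lra].
Qed.

Lemma vroot_cont x : continuity_pt vroot x.
Proof.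
  apply (root_cont (fun E v => Pe_S (clampE E) v) vroot V1 V2).
  - intros E w1 w2 H1 H12 H2. apply Pe_mono; [apply clampE_bounds | lra | lra | lra].
  - exact vroot_spec.
  - intros w E. unfold Pe_S.
    apply (hor2_cont PeC clampE (fun _ => w)); [apply clampE_cont | apply const_cont].
  - intros E. apply cert1, clampE_bounds.
  - intros E. apply cert2, clampE_bounds.
Qed.

Definition s0 : R := 146/100.
Lemma s0E : / (s0 ^ 2) = E0. Proof. unfold s0, E0. field. Qed.

Lemma Rpower_cont q c : 0 < c -> continuity_pt (fun x => Rpower x q) c.
Proof.
  intros Hc. apply derivable_continuous_pt.
  exists (q * Rpower c (q - 1)). apply derivable_pt_lim_power. exact Hc.
Qed.

Lemma analytic q : 0 <= q < 4 -> exists s v, s0 <= s /\ V1 <= v <= V2 /\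
  Pe_S (/ s^2) v = 0 /\ s^4 * He_S (/ s^2) v = Rpower s q.
Proof.
  intros Hq.
  set (S1 := exp (/ (4 - q) + 1)).
  assert (HS1 : 2 < S1).
  { unfold S1. assert (0 < / (4 - q)) by (apply Rinv_0_lt_compat; lra).
    pose proof (exp_ineq1 (/ (4 - q) + 1) ltac:(lra)). lra. }
  assert (Hs0 : 1 < s0) by (unfold s0; lra).
  assert (Hs02 : s0 < 2) by (unfold s0; lra).
  set (cl := fun s => Rmax s0 (Rmin s S1)).
  assert (Hcl : forall s, s0 <= cl s <= S1).
  { intros s. unfold cl, Rmax, Rmin. repeat destruct Rle_dec; lra. }
  assert (Hcl_id : forall s, s0 <= s <= S1 -> cl s = s).
  { intros s Hs. unfold cl, Rmax, Rmin. repeat destruct Rle_dec; lra. }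
  set (G := fun s => cl s ^ 4 * He_S (/ cl s ^ 2) (vroot (/ cl s ^ 2)) - Rpower (cl s) q).
  assert (Gcont : continuity G).
  { intros x. unfold G.
    assert (Hc : continuity_pt cl x) by (apply lip_cont; intros a b; apply clamp_lip; lra).
    assert (Hpos : 0 < cl x) by (pose proof (Hcl x); lra).
    assert (Hinv : continuity_pt (fun s => / cl s ^ 2) x).
    { apply (continuity_pt_inv (fun s => cl s ^ 2)).
      - apply (continuity_pt_mult cl (fun s => cl s ^ 1)).
        + exact Hc.
        + apply (continuity_pt_mult cl (fun s => 1)); [exact Hc | apply const_cont].
      - apply pow_nonzero. lra. }
    apply (continuity_pt_minus (fun s => cl s ^ 4 * He_S (/ cl s ^ 2) (vroot (/ cl s ^ 2))) (fun s => Rpower (cl s) q)).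
    - apply (continuity_pt_mult (fun s => cl s ^ 4) (fun s => He_S (/ cl s ^ 2) (vroot (/ cl s ^ 2)))).
      + apply (continuity_pt_comp cl (fun c => c ^ 4)); [exact Hc|].
        apply derivable_continuous_pt. apply derivable_pt_pow.
      + unfold He_S. apply (hor2_cont HeC (fun s => / cl s ^ 2) (fun s => vroot (/ cl s ^ 2))).
        * exact Hinv.
        * apply (continuity_pt_comp (fun s => / cl s ^ 2) vroot); [exact Hinv | apply vroot_cont].
    - apply (continuity_pt_comp cl (fun c => Rpower c q)); [exact Hc | apply Rpower_cont; exact Hpos]. }
  assert (HE : forall s, s0 <= s -> 0 <= / s ^ 2 <= E0).
  { intros s Hs. rewrite -s0E. split.
    - left. apply Rinv_0_lt_compat. apply pow_lt. lra.
    - apply Rinv_le_contravar; [apply pow_lt; lra|]. apply pow_incr. lra. }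
  assert (Gs0 : G s0 < 0).
  { unfold G. rewrite (Hcl_id s0 ltac:(lra)) s0E.
    destruct (vroot_spec E0) as [[Hv1 Hv2] Hv0].
    rewrite (clampE_id E0 ltac:(pose proof E0_pos; lra)) in Hv0.
    set (v := vroot E0) in *.
    assert (Hvp : 0 < v).
    { destruct (Rlt_le_dec 0 v) as [H|H]; [exact H|]. exfalso.
      pose proof cert4a. destruct (Rle_lt_or_eq_dec v 0 H) as [H'|H'].
      - assert (Pe_S E0 0 < Pe_S E0 v) by (apply Pe_mono; [pose proof E0_pos; lra | lra | lra | unfold V2; lra]). lra.
      - rewrite H' in Hv0. lra. }
    assert (Hh : He_S E0 v < E0 ^ 2) by (apply cert4b; lra).
    assert (H1 : s0 ^ 4 * He_S E0 v < 1).
    { replace 1 with (s0 ^ 4 * E0 ^ 2) by (unfold s0, E0; field).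
      apply Rmult_lt_compat_l; [apply pow_lt; lra | exact Hh]. }
    assert (H2 : 1 <= Rpower s0 q).
    { destruct (Rle_lt_or_eq_dec 0 q (proj1 Hq)) as [Hq0|Hq0].
      - rewrite -(Rpower_O s0 ltac:(lra)). left. apply Rpower_lt; lra.
      - rewrite -Hq0 (Rpower_O s0 ltac:(lra)). lra. }
    lra. }
  assert (GS1 : 0 < G S1).
  { unfold G. rewrite (Hcl_id S1 ltac:(lra)).
    set (E := / S1 ^ 2).
    assert (HE4 : 0 <= E <= 1/4).
    { unfold E. split.
      - left. apply Rinv_0_lt_compat. apply pow_lt. lra.
      - replace (1/4) with (/ (2 ^ 2)) by field.
        apply Rinv_le_contravar; [apply pow_lt; lra|]. apply pow_incr. lra. }
    destruct (vroot_spec E) as [Hv _].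
    assert (Hh : 1/2 < He_S E (vroot E)) by (apply cert5; assumption).
    assert (Hln : ln S1 = / (4 - q) + 1) by (unfold S1; apply ln_exp).
    assert (Hpow : S1 ^ 4 = exp (4 * ln S1)).
    { rewrite -(Rpower_pow 4 S1 ltac:(lra)). unfold Rpower. f_equal. f_equal. simpl. ring. }
    assert (Hrq : Rpower S1 q = exp (q * ln S1)) by reflexivity.
    assert (Hsplit : exp (4 * ln S1) = exp ((4 - q) * ln S1) * exp (q * ln S1)).
    { rewrite -exp_plus. f_equal. ring. }
    assert (Hbig : 2 < exp ((4 - q) * ln S1)).
    { rewrite Hln. replace ((4 - q) * (/ (4 - q) + 1)) with (1 + (4 - q)) by (field; lra).
      pose proof (exp_ineq1 (1 + (4 - q)) ltac:(lra)). lra. }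
    assert (Hep : 0 < exp (q * ln S1)) by apply exp_pos.
    rewrite Hrq Hpow Hsplit.
    assert (0 < exp ((4 - q) * ln S1) * exp (q * ln S1)) by (apply Rmult_lt_0_compat; lra).
    nra. }
  destruct (IVT G s0 S1 Gcont ltac:(lra) Gs0 GS1) as [z [Hz HGz]].
  exists (cl z), (vroot (/ cl z ^ 2)).
  destruct (Hcl z) as [Hz1 Hz2].
  destruct (vroot_spec (/ cl z ^ 2)) as [Hv Hv0].
  rewrite (clampE_id (/ cl z ^ 2) ltac:(apply HE; lra)) in Hv0.
  split; [lra|]. split; [exact Hv|]. split; [exact Hv0|].
  unfold G in HGz. lra.
Qed.

Lemma analytic2 q : 0 <= q < 4 -> exists s v, 1 < s /\
  Pe_S (/ s^2) v = 0 /\ s^4 * He_S (/ s^2) v = Rpower s q.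
Proof.
  intros Hq. destruct (analytic q Hq) as [s [v [Hs [_ [H1 H2]]]]].
  exists s, v. split; [unfold s0 in Hs; lra | split; assumption].
Qed.

Local Close Scope R_scope.
From mathcomp Require Import ring lra.
Local Open Scope ring_scope.
Notation R := Rdefinitions.R.


Definition mk (a b c d : R) : 'M[R]_2 :=
  \matrix_(i < 2, j < 2) if i == ord0 then (if j == ord0 then a else b) else (if j == ord0 then c else d).

Arguments mk (a b c d)%_ring_scope.

Lemma mk_mul a b c d e f g h : mk a b c d * mk e f g h = mk (a*e+b*g) (a*f+b*h) (c*e+d*g) (c*f+d*h).
Proof.
apply/matrixP => i j; rewrite !mxE big_ord_recl big_ord1 !mxE.
by case: i => [[|[|]]] //= ?; case: j => [[|[|]]] //= ?.
Qed.

Lemma mk_det a b c d : \det (mk a b c d) = a * d - b * c.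
Proof.
rewrite (expand_det_row _ ord0) big_ord_recl big_ord1 /cofactor !det_mx11 !mxE /=.
rewrite /bump /=. rewrite !expr0 !expr1 !mul1r. 
ring.
Qed.

Lemma mk_one : mk 1 0 0 1 = 1.
Proof.
apply/matrixP => i j; rewrite !mxE /=.
by case: i => [[|[|]]] //= ?; case: j => [[|[|]]] //= ?.
Qed.


Lemma mk_eq a b c d a' b' c' d' : a = a' -> b = b' -> c = c' -> d = d' -> mk a b c d = mk a' b' c' d'.
Proof. by move=> -> -> -> ->. Qed.

Lemma mk_inv a b c d : a * d - b * c = 1 -> (mk a b c d)^-1 = mk d (-b) (-c) a.
Proof.
move=> h.
have h1 : mk a b c d * mk d (-b) (-c) a = 1.
  rewrite mk_mul -mk_one; congr mk; try ring; apply: (etrans _ h); ring.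
have h2 : mk d (-b) (-c) a * mk a b c d = 1.
  rewrite mk_mul -mk_one; congr mk; try ring; apply: (etrans _ h); ring.
have hu : mk a b c d \is a GRing.unit.
  by apply/unitrP; exists (mk d (-b) (-c) a).
by rewrite -[LHS]mulr1 -h1 mulKr.
Qed.
Arguments mk_inv {a b c d}.

Lemma mk_add a b c d e f g h : mk a b c d + mk e f g h = mk (a+e) (b+f) (c+g) (d+h).
Proof.
apply/matrixP => i j; rewrite !mxE.
by case: i => [[|[|]]] //= ?; case: j => [[|[|]]] //= ?.
Qed.

Definition rileyP (s t : R) := (- (s^-1)^+8*t + 3*(s^-1)^+6*t + 4*(s^-1)^+6*t^+2 - (s^-1)^+4 - 6*(s^-1)^+4*t - 9*(s^-1)^+4*t^+2 - 6*(s^-1)^+4*t^+3 + 3*(s^-1)^+2 + 11*(s^-1)^+2*t + 16*(s^-1)^+2*t^+2 + 9*(s^-1)^+2*t^+3 + 4*(s^-1)^+2*t^+4 - 3 - 13*t - 19*t^+2 - 14*t^+3 - 3*t^+4 - t^+5 + 3*s^+2 + 11*s^+2*t + 16*s^+2*t^+2 + 9*s^+2*t^+3 + 4*s^+2*t^+4 - s^+4 - 6*s^+4*t - 9*s^+4*t^+2 - 6*s^+4*t^+3 + 3*s^+6*t + 4*s^+6*t^+2 - s^+8*t).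

Definition lred (s t : R) := ((s^-1)^+10*t - 2*(s^-1)^+8*t - 2*(s^-1)^+8*t^+2 + (s^-1)^+6 + 3*(s^-1)^+6*t + 2*(s^-1)^+6*t^+2 + (s^-1)^+6*t^+3 - 2*(s^-1)^+4 - 2*(s^-1)^+4*t - (s^-1)^+4*t^+2 - (s^-1)^+2*t - 2*(s^-1)^+2*t^+2 - (s^-1)^+2*t^+3 + 1 + 4*t + 3*t^+2 - 2*s^+2 - 3*s^+2*t + s^+4).

Definition cQ00 (s t : R) := (- (s^-1)^+20*t^+2 + 11*(s^-1)^+18*t^+2 + 3*(s^-1)^+18*t^+3 - (s^-1)^+16*t - 58*(s^-1)^+16*t^+2 - 30*(s^-1)^+16*t^+3 - 3*(s^-1)^+16*t^+4 + 11*(s^-1)^+14*t + 196*(s^-1)^+14*t^+2 + 140*(s^-1)^+14*t^+3 + 27*(s^-1)^+14*t^+4 + (s^-1)^+14*t^+5 + (s^-1)^+12 - 55*(s^-1)^+12*t - 476*(s^-1)^+12*t^+2 - 403*(s^-1)^+12*t^+3 - 109*(s^-1)^+12*t^+4 - 8*(s^-1)^+12*t^+5 - 9*(s^-1)^+10 + 166*(s^-1)^+10*t + 872*(s^-1)^+10*t^+2 + 789*(s^-1)^+10*t^+3 + 257*(s^-1)^+10*t^+4 + 27*(s^-1)^+10*t^+5 + 35*(s^-1)^+8 - 337*(s^-1)^+8*t - 1207*(s^-1)^+8*t^+2 - 1071*(s^-1)^+8*t^+3 - 378*(s^-1)^+8*t^+4 - 48*(s^-1)^+8*t^+5 - 75*(s^-1)^+6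 + 478*(s^-1)^+6*t + 1187*(s^-1)^+6*t^+2 + 930*(s^-1)^+6*t^+3 + 318*(s^-1)^+6*t^+4 + 42*(s^-1)^+6*t^+5 + 90*(s^-1)^+4 - 455*(s^-1)^+4*t - 621*(s^-1)^+4*t^+2 - 270*(s^-1)^+4*t^+3 - 42*(s^-1)^+4*t^+4 - 42*(s^-1)^+2 + 207*(s^-1)^+2*t - 317*(s^-1)^+2*t^+2 - 579*(s^-1)^+2*t^+3 - 270*(s^-1)^+2*t^+4 - 42*(s^-1)^+2*t^+5 - 42 + 165*t + 1120*t^+2 + 1092*t^+3 + 393*t^+4 + 48*t^+5 + 90*s^+2 - 449*s^+2*t - 1358*s^+2*t^+2 - 1032*s^+2*t^+3 - 297*s^+2*t^+4 - 27*s^+2*t^+5 - 75*s^+4 + 499*s^+4*t + 1046*s^+4*t^+2 + 625*s^+4*t^+3 + 135*s^+4*t^+4 + 8*s^+4*t^+5 + 35*s^+6 - 356*s^+6*t - 550*s^+6*t^+2 - 245*s^+6*t^+3 - 35*s^+6*t^+4 - s^+6*t^+5 - 9*s^+8 + 173*s^+8*t + 193*s^+8*t^+2 + 57*s^+8*t^+3 + 4*s^+8*t^+4 + s^+10 - 56*s^+10*t - 41*s^+10*t^+2 - 6*s^+10*t^+3 + 11*s^+12*t + 4*s^+12*t^+2 - s^+14*t).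

Definition cQ01 (s t : R) := ((s^-1)^+14*t - 12*(s^-1)^+12*t - 4*(s^-1)^+12*t^+2 + 68*(s^-1)^+10*t + 44*(s^-1)^+10*t^+2 + 6*(s^-1)^+10*t^+3 - (s^-1)^+8 - 242*(s^-1)^+8*t - 226*(s^-1)^+8*t^+2 - 60*(s^-1)^+8*t^+3 - 4*(s^-1)^+8*t^+4 + 10*(s^-1)^+6 + 606*(s^-1)^+6*t + 718*(s^-1)^+6*t^+2 + 275*(s^-1)^+6*t^+3 + 36*(s^-1)^+6*t^+4 + (s^-1)^+6*t^+5 - 44*(s^-1)^+4 - 1128*(s^-1)^+4*t - 1568*(s^-1)^+4*t^+2 - 760*(s^-1)^+4*t^+3 - 144*(s^-1)^+4*t^+4 - 8*(s^-1)^+4*t^+5 + 110*(s^-1)^+2 + 1588*(s^-1)^+2*t + 2450*(s^-1)^+2*t^+2 + 1389*(s^-1)^+2*t^+3 + 332*(s^-1)^+2*t^+4 + 27*(s^-1)^+2*t^+5 - 165 - 1642*t - 2698*t^+2 - 1692*t^+3 - 468*t^+4 - 48*t^+5 + 132*s^+2 + 1065*s^+2*t + 1808*s^+2*t^+2 + 1200*s^+2*t^+3 + 360*s^+2*t^+4 + 42*s^+2*t^+5 - 132*s^+6 - 1065*s^+6*t - 1808*s^+6*t^+2 - 1200*s^+6*t^+3 - 360*s^+6*t^+4 - 42*s^+6*t^+5 + 165*s^+8 + 1642*s^+8*t + 2698*s^+8*t^+2 + 1692*s^+8*t^+3 + 468*s^+8*t^+4 + 48*s^+8*t^+5 - 110*s^+10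 - 1588*s^+10*t - 2450*s^+10*t^+2 - 1389*s^+10*t^+3 - 332*s^+10*t^+4 - 27*s^+10*t^+5 + 44*s^+12 + 1128*s^+12*t + 1568*s^+12*t^+2 + 760*s^+12*t^+3 + 144*s^+12*t^+4 + 8*s^+12*t^+5 - 10*s^+14 - 606*s^+14*t - 718*s^+14*t^+2 - 275*s^+14*t^+3 - 36*s^+14*t^+4 - s^+14*t^+5 + s^+16 + 242*s^+16*t + 226*s^+16*t^+2 + 60*s^+16*t^+3 + 4*s^+16*t^+4 - 68*s^+18*t - 44*s^+18*t^+2 - 6*s^+18*t^+3 + 12*s^+20*t + 4*s^+20*t^+2 - s^+22*t).

Definition cQ10 (s t : R) := ((s^-1)^+20*t^+2 - 10*(s^-1)^+18*t^+2 - 3*(s^-1)^+18*t^+3 + 47*(s^-1)^+16*t^+2 + 28*(s^-1)^+16*t^+3 + 3*(s^-1)^+16*t^+4 - (s^-1)^+14*t - 138*(s^-1)^+14*t^+2 - 120*(s^-1)^+14*t^+3 - 26*(s^-1)^+14*t^+4 - (s^-1)^+14*t^+5 + 8*(s^-1)^+12*t + 282*(s^-1)^+12*t^+2 + 312*(s^-1)^+12*t^+3 + 100*(s^-1)^+12*t^+4 + 8*(s^-1)^+12*t^+5 - 27*(s^-1)^+10*t - 418*(s^-1)^+10*t^+2 - 542*(s^-1)^+10*t^+3 - 222*(s^-1)^+10*t^+4 - 27*(s^-1)^+10*t^+5 + 48*(s^-1)^+8*t + 443*(s^-1)^+8*t^+2 + 636*(s^-1)^+8*t^+3 + 303*(s^-1)^+8*t^+4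 + 48*(s^-1)^+8*t^+5 - 42*(s^-1)^+6*t - 290*(s^-1)^+6*t^+2 - 441*(s^-1)^+6*t^+3 - 228*(s^-1)^+6*t^+4 - 42*(s^-1)^+6*t^+5 + 42*(s^-1)^+2*t + 290*(s^-1)^+2*t^+2 + 441*(s^-1)^+2*t^+3 + 228*(s^-1)^+2*t^+4 + 42*(s^-1)^+2*t^+5 - 48*t - 443*t^+2 - 636*t^+3 - 303*t^+4 - 48*t^+5 + 27*s^+2*t + 418*s^+2*t^+2 + 542*s^+2*t^+3 + 222*s^+2*t^+4 + 27*s^+2*t^+5 - 8*s^+4*t - 282*s^+4*t^+2 - 312*s^+4*t^+3 - 100*s^+4*t^+4 - 8*s^+4*t^+5 + s^+6*t + 138*s^+6*t^+2 + 120*s^+6*t^+3 + 26*s^+6*t^+4 + s^+6*t^+5 - 47*s^+8*t^+2 - 28*s^+8*t^+3 - 3*s^+8*t^+4 + 10*s^+10*t^+2 + 3*s^+10*t^+3 - s^+12*t^+2).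

Definition W00 (s u : R) := (- (s^-1)^+6*u^+2 - 3*(s^-1)^+5*u^+3 + 4*(s^-1)^+4*u^+2 - 3*(s^-1)^+4*u^+4 - (s^-1)^+3*u + 12*(s^-1)^+3*u^+3 - (s^-1)^+3*u^+5 - 11*(s^-1)^+2*u^+2 + 12*(s^-1)^+2*u^+4 + 3*(s^-1)*u - 26*(s^-1)*u^+3 + 4*(s^-1)*u^+5 + 20*u^+2 - 22*u^+4 - 6*s*u + 37*s*u^+3 - 6*s*u^+5 + s^+2 - 25*s^+2*u^+2 + 24*s^+2*u^+4 + 6*s^+3*u - 35*s^+3*u^+3 + 4*s^+3*u^+5 + 22*s^+4*u^+2 - 15*s^+4*u^+4 - 5*s^+5*u + 21*s^+5*u^+3 - s^+5*u^+5 - 13*s^+6*u^+2 + 4*s^+6*u^+4 + 3*s^+7*u - 6*s^+7*u^+3 + 4*s^+8*u^+2 - s^+9*u).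

Definition W01 (s u : R) := (- (s^-1)^+7*u - 4*(s^-1)^+6*u^+2 + 4*(s^-1)^+5*u - 6*(s^-1)^+5*u^+3 - (s^-1)^+4 + 16*(s^-1)^+4*u^+2 - 4*(s^-1)^+4*u^+4 - 11*(s^-1)^+3*u + 24*(s^-1)^+3*u^+3 - (s^-1)^+3*u^+5 + 2*(s^-1)^+2 - 35*(s^-1)^+2*u^+2 + 16*(s^-1)^+2*u^+4 + 18*(s^-1)*u - 47*(s^-1)*u^+3 + 4*(s^-1)*u^+5 - 3 + 50*u^+2 - 28*u^+4 - 21*s*u + 58*s*u^+3 - 6*s*u^+5 + 3*s^+2 - 49*s^+2*u^+2 + 28*s^+2*u^+4 + 16*s^+3*u - 47*s^+3*u^+3 + 4*s^+3*u^+5 - s^+4 + 34*s^+4*u^+2 - 16*s^+4*u^+4 - 9*s^+5*u + 24*s^+5*u^+3 - s^+5*u^+5 - 16*s^+6*u^+2 + 4*s^+6*u^+4 + 4*s^+7*u - 6*s^+7*u^+3 + 4*s^+8*u^+2 - s^+9*u).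

Definition W10 (s u : R) := ((s^-1)^+8*u^+2 + 3*(s^-1)^+7*u^+3 - 3*(s^-1)^+6*u^+2 + 3*(s^-1)^+6*u^+4 - 10*(s^-1)^+5*u^+3 + (s^-1)^+5*u^+5 + 6*(s^-1)^+4*u^+2 - 11*(s^-1)^+4*u^+4 - (s^-1)^+3*u + 18*(s^-1)^+3*u^+3 - 4*(s^-1)^+3*u^+5 - 9*(s^-1)^+2*u^+2 + 18*(s^-1)^+2*u^+4 + 2*(s^-1)*u - 22*(s^-1)*u^+3 + 6*(s^-1)*u^+5 + 10*u^+2 - 18*u^+4 - s*u + 18*s*u^+3 - 4*s*u^+5 - 7*s^+2*u^+2 + 11*s^+2*u^+4 + s^+3*u - 10*s^+3*u^+3 + s^+3*u^+5 + 3*s^+4*u^+2 - 3*s^+4*u^+4 + 3*s^+5*u^+3 - s^+6*u^+2).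

Definition W11 (s u : R) := ((s^-1)^+9*u + 4*(s^-1)^+8*u^+2 - 3*(s^-1)^+7*u + 6*(s^-1)^+7*u^+3 - 13*(s^-1)^+6*u^+2 + 4*(s^-1)^+6*u^+4 + 5*(s^-1)^+5*u - 21*(s^-1)^+5*u^+3 + (s^-1)^+5*u^+5 + 22*(s^-1)^+4*u^+2 - 15*(s^-1)^+4*u^+4 - 6*(s^-1)^+3*u + 35*(s^-1)^+3*u^+3 - 4*(s^-1)^+3*u^+5 + (s^-1)^+2 - 25*(s^-1)^+2*u^+2 + 24*(s^-1)^+2*u^+4 + 6*(s^-1)*u - 37*(s^-1)*u^+3 + 6*(s^-1)*u^+5 + 20*u^+2 - 22*u^+4 - 3*s*u + 26*s*u^+3 - 4*s*u^+5 - 11*s^+2*u^+2 + 12*s^+2*u^+4 + s^+3*u - 12*s^+3*u^+3 + s^+3*u^+5 + 4*s^+4*u^+2 - 3*s^+4*u^+4 + 3*s^+5*u^+3 - s^+6*u^+2).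

Definition Ws00 (s u : R) := (- (s^-1)^+6*u^+2 - 3*(s^-1)^+5*u^+3 + 4*(s^-1)^+4*u^+2 - 3*(s^-1)^+4*u^+4 - (s^-1)^+3*u + 12*(s^-1)^+3*u^+3 - (s^-1)^+3*u^+5 - 11*(s^-1)^+2*u^+2 + 12*(s^-1)^+2*u^+4 + 3*(s^-1)*u - 26*(s^-1)*u^+3 + 4*(s^-1)*u^+5 + 20*u^+2 - 22*u^+4 - 6*s*u + 37*s*u^+3 - 6*s*u^+5 + s^+2 - 25*s^+2*u^+2 + 24*s^+2*u^+4 + 6*s^+3*u - 35*s^+3*u^+3 + 4*s^+3*u^+5 + 22*s^+4*u^+2 - 15*s^+4*u^+4 - 5*s^+5*u + 21*s^+5*u^+3 - s^+5*u^+5 - 13*s^+6*u^+2 + 4*s^+6*u^+4 + 3*s^+7*u - 6*s^+7*u^+3 + 4*s^+8*u^+2 - s^+9*u).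

Definition Ws01 (s u : R) := (- (s^-1)^+9*u - 4*(s^-1)^+8*u^+2 + 4*(s^-1)^+7*u - 6*(s^-1)^+7*u^+3 + 16*(s^-1)^+6*u^+2 - 4*(s^-1)^+6*u^+4 - 9*(s^-1)^+5*u + 24*(s^-1)^+5*u^+3 - (s^-1)^+5*u^+5 + (s^-1)^+4 - 34*(s^-1)^+4*u^+2 + 16*(s^-1)^+4*u^+4 + 16*(s^-1)^+3*u - 47*(s^-1)^+3*u^+3 + 4*(s^-1)^+3*u^+5 - 3*(s^-1)^+2 + 49*(s^-1)^+2*u^+2 - 28*(s^-1)^+2*u^+4 - 21*(s^-1)*u + 58*(s^-1)*u^+3 - 6*(s^-1)*u^+5 + 3 - 50*u^+2 + 28*u^+4 + 18*s*u - 47*s*u^+3 + 4*s*u^+5 - 2*s^+2 + 35*s^+2*u^+2 - 16*s^+2*u^+4 - 11*s^+3*u + 24*s^+3*u^+3 - s^+3*u^+5 + s^+4 - 16*s^+4*u^+2 + 4*s^+4*u^+4 + 4*s^+5*u - 6*s^+5*u^+3 + 4*s^+6*u^+2 - s^+7*u).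

Definition Ws10 (s u : R) := ((s^-1)^+6*u^+2 + 3*(s^-1)^+5*u^+3 - 3*(s^-1)^+4*u^+2 + 3*(s^-1)^+4*u^+4 + (s^-1)^+3*u - 10*(s^-1)^+3*u^+3 + (s^-1)^+3*u^+5 + 7*(s^-1)^+2*u^+2 - 11*(s^-1)^+2*u^+4 - (s^-1)*u + 18*(s^-1)*u^+3 - 4*(s^-1)*u^+5 - 10*u^+2 + 18*u^+4 + 2*s*u - 22*s*u^+3 + 6*s*u^+5 + 9*s^+2*u^+2 - 18*s^+2*u^+4 - s^+3*u + 18*s^+3*u^+3 - 4*s^+3*u^+5 - 6*s^+4*u^+2 + 11*s^+4*u^+4 - 10*s^+5*u^+3 + s^+5*u^+5 + 3*s^+6*u^+2 - 3*s^+6*u^+4 + 3*s^+7*u^+3 - s^+8*u^+2).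

Definition Ws11 (s u : R) := ((s^-1)^+9*u + 4*(s^-1)^+8*u^+2 - 3*(s^-1)^+7*u + 6*(s^-1)^+7*u^+3 - 13*(s^-1)^+6*u^+2 + 4*(s^-1)^+6*u^+4 + 5*(s^-1)^+5*u - 21*(s^-1)^+5*u^+3 + (s^-1)^+5*u^+5 + 22*(s^-1)^+4*u^+2 - 15*(s^-1)^+4*u^+4 - 6*(s^-1)^+3*u + 35*(s^-1)^+3*u^+3 - 4*(s^-1)^+3*u^+5 + (s^-1)^+2 - 25*(s^-1)^+2*u^+2 + 24*(s^-1)^+2*u^+4 + 6*(s^-1)*u - 37*(s^-1)*u^+3 + 6*(s^-1)*u^+5 + 20*u^+2 - 22*u^+4 - 3*s*u + 26*s*u^+3 - 4*s*u^+5 - 11*s^+2*u^+2 + 12*s^+2*u^+4 + s^+3*u - 12*s^+3*u^+3 + s^+3*u^+5 + 4*s^+4*u^+2 - 3*s^+4*u^+4 + 3*s^+5*u^+3 - s^+6*u^+2).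

Arguments rileyP (s t)%_ring_scope.
Arguments lred (s t)%_ring_scope.
Arguments cQ00 (s t)%_ring_scope.
Arguments cQ01 (s t)%_ring_scope.
Arguments cQ10 (s t)%_ring_scope.
Arguments W00 (s u)%_ring_scope.
Arguments W01 (s u)%_ring_scope.
Arguments W10 (s u)%_ring_scope.
Arguments W11 (s u)%_ring_scope.
Arguments Ws00 (s u)%_ring_scope.
Arguments Ws01 (s u)%_ring_scope.
Arguments Ws10 (s u)%_ring_scope.
Arguments Ws11 (s u)%_ring_scope.

Lemma mk_zero : mk 0 0 0 0 = 0.
Proof.
apply/matrixP => i j; rewrite !mxE.
by case: i => [[|[|]]] //= ?; case: j => [[|[|]]] //= ?.
Qed.

Lemma mk_inj a b c d a' b' c' d' : mk a b c d = mk a' b' c' d' ->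
  [/\ a = a', b = b', c = c' & d = d'].
Proof.
move=> h.
have e := fun i j => congr1 (fun M : 'M[R]_2 => M i j) h.
have := e ord0 ord0; have := e ord0 (lift ord0 ord0);
have := e (lift ord0 ord0) ord0; have := e (lift ord0 ord0) (lift ord0 ord0).
by rewrite !mxE /=; move=> -> -> -> ->.
Qed.

Lemma dA (s : R) : s != 0 -> s * s^-1 - 0 * 0 = 1.
Proof. by move=> hs; field. Qed.
Lemma dB (s u : R) : s != 0 -> (s-u) * (s^-1+u) - ((s - s^-1)-u) * u = 1.
Proof. by move=> hs; field. Qed.

Lemma rel (s u : R) : s != 0 ->
  word_w (mk s 0 0 s^-1) (mk (s-u) ((s - s^-1)-u) u (s^-1+u)) * mk s 0 0 s^-1 =
  mk (s-u) ((s - s^-1)-u) u (s^-1+u) * word_w (mk s 0 0 s^-1) (mk (s-u) ((s - s^-1)-u) u (s^-1+u))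
  + mk (u * rileyP s (u * (s - s^-1))) ((u - (s - s^-1)) * rileyP s (u * (s - s^-1)))
       (- (u * rileyP s (u * (s - s^-1)))) (- (u * rileyP s (u * (s - s^-1)))).
Proof.
move=> hs.
rewrite /word_w !(mk_inv (dA s hs)) !(mk_inv (dB s u hs)) !mk_mul mk_add.
apply: mk_eq; rewrite /rileyP; field; exact: hs.
Qed.

Lemma W_eq (s u : R) : s != 0 ->
  word_w (mk s 0 0 s^-1) (mk (s-u) ((s - s^-1)-u) u (s^-1+u)) = mk (W00 s u) (W01 s u) (W10 s u) (W11 s u).
Proof.
move=> hs.
rewrite /word_w !(mk_inv (dA s hs)) !(mk_inv (dB s u hs)) !mk_mul.
apply: mk_eq; rewrite /W00 /W01 /W10 /W11; field; exact: hs.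
Qed.

Lemma Ws_eq (s u : R) : s != 0 ->
  word_wstar (mk s 0 0 s^-1) (mk (s-u) ((s - s^-1)-u) u (s^-1+u)) = mk (Ws00 s u) (Ws01 s u) (Ws10 s u) (Ws11 s u).
Proof.
move=> hs.
rewrite /word_wstar !(mk_inv (dA s hs)) !(mk_inv (dB s u hs)) !mk_mul.
apply: mk_eq; rewrite /Ws00 /Ws01 /Ws10 /Ws11; field; exact: hs.
Qed.

Lemma A4 (s : R) : s != 0 -> (mk s 0 0 s^-1) ^- 4 = mk (s^-1^+4) 0 0 (s^+4).
Proof.
move=> hs.
have h4 : s^+4 * s^-1^+4 - 0 * 0 = 1 by field.
have -> : (mk s 0 0 s^-1) ^+ 4 = mk (s^+4) 0 0 (s^-1^+4).
  by rewrite !exprS expr0 mulr1 !mk_mul; apply: mk_eq; ring.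
by rewrite (mk_inv h4) oppr0.
Qed.

Lemma L_eq (s u : R) : s != 0 -> s * s - 1 != 0 ->
  longitude (mk s 0 0 s^-1) (mk (s-u) ((s - s^-1)-u) u (s^-1+u)) =
  mk (lred s (u*(s - s^-1)) + cQ00 s (u*(s - s^-1)) / (s - s^-1)^+10 * rileyP s (u*(s - s^-1)))
     (cQ01 s (u*(s - s^-1)) / (s - s^-1)^+10 * rileyP s (u*(s - s^-1)))
     (cQ10 s (u*(s - s^-1)) / (s - s^-1)^+10 * rileyP s (u*(s - s^-1)))
     ((Ws10 s u * W01 s u + Ws11 s u * W11 s u) * s^+4).
Proof.
move=> hs hss.
rewrite /longitude (Ws_eq s u hs) (W_eq s u hs) (A4 s hs) !mk_mul.
apply: mk_eq; rewrite /W00 /W01 /W10 /W11 /Ws00 /Ws01 /Ws10 /Ws11 /lred /cQ00 /cQ01 /cQ10 /rileyP; field.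
all: try (apply/andP; split); assumption.
Qed.

Lemma det_L (s u : R) : s != 0 ->
  \det (longitude (mk s 0 0 s^-1) (mk (s-u) ((s - s^-1)-u) u (s^-1+u))) = 1.
Proof.
move=> hs.
rewrite /longitude /word_wstar /word_w (A4 s hs) !detM !(mk_inv (dA s hs)) !(mk_inv (dB s u hs)) !mk_det.
field; exact: hs.
Qed.

Lemma IZRnegE p : IZR (Zneg p) = - (nat_of_pos p)%:R.
Proof. have -> : IZR (Zneg p) = - IZR (Zpos p) by []. by rewrite IZRposE INRE. Qed.
(* note: IZR (Zneg p) is convertible to - IZR (Zpos p) *)

Lemma P_bridge (s v : R) : s != 0 -> rileyP s (v * s^-1^+4) = s^+4 * Pe_S (s^-1^+2) v.
Proof.
move=> hs. rewrite /Pe_S /PeC; cbn [hor2 hor].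
rewrite ?RplusE ?RmultE ?R0E ?IZRnegE ?IZRposE ?INRE /=.
rewrite /rileyP; field; exact: hs.
Qed.

Lemma l_bridge (s v : R) : s != 0 -> lred s (v * s^-1^+4) = s^+4 * He_S (s^-1^+2) v.
Proof.
move=> hs. rewrite /He_S /HeC; cbn [hor2 hor].
rewrite ?RplusE ?RmultE ?R0E ?IZRnegE ?IZRposE ?INRE /=.
rewrite /lred; field; exact: hs.
Qed.

Lemma diag_exprz (a : R) (z : int) : a != 0 -> (mk a 0 0 a^-1) ^ z = mk (a ^ z) 0 0 (a ^ z)^-1.
Proof.
move=> ha.
have hn : forall n : nat, (mk a 0 0 a^-1) ^+ n = mk (a ^+ n) 0 0 (a ^+ n)^-1.
  elim=> [|n IH]; first by rewrite !expr0 invr1 mk_one.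
  rewrite exprS IH mk_mul exprS; apply: mk_eq; try ring.
  by rewrite mul0r add0r invfM.
case: z => n.
- by rewrite /exprz hn.
- rewrite /exprz hn.
  have hk : a ^+ n.+1 != 0 by rewrite expf_neq0.
  have hd : a ^+ n.+1 * (a ^+ n.+1)^-1 - 0 * 0 = 1 by rewrite mulr0 subr0 mulfV.
  by rewrite (mk_inv hd) oppr0 invrK.
Qed.

Lemma Rpower_exprz (x : R) (z : int) : 0 < x -> x ^ z = Rpower x (z%:~R).
Proof.
move=> /RltP hx.
case: z => n.
- rewrite /exprz -RpowE -(Rpower_pow n x hx) INRE. by [].
- rewrite /exprz -RpowE -(Rpower_pow n.+1 x hx) INRE.
  have -> : (Negz n)%:~R = - (n.+1)%:R :> R by rewrite NegzE mulrNz.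
  by rewrite -RoppE Rpower_Ropp RinvE.
Qed.

Theorem mainTheorem11 (r : rat) :
  -4 < r <= 0 ->
  exists A B : 'M[Rdefinitions.R]_2, surgery_rep r A B /\ nonabelian_rep A B.
Proof.
move=> /andP [hr4 hr0].
pose q := - (ratr r : R).
have hq0 : 0 <= q by rewrite /q oppr_ge0 lerq0.
have hq4 : q < 4.
  have h : ratr (-4 : rat) < ratr r :> R by rewrite ltr_rat.
  have e : ratr (-4 : rat) = -4 :> R by rewrite rmorphN /= ratr_nat.
  rewrite e in h. by rewrite /q ltrNl.
have h4 : IZR 4 = 4%:R :> R by rewrite IZRposE INRE.
have hq : Rle 0 q /\ Rlt q 4.
  split; first by apply/RleP.
  by apply/RltP; rewrite h4.
have [s [v [/RltP hs1 [hP0 hl0]]]] := analytic2 q hq.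
rewrite R1E in hs1.
have s_pos : 0 < s by apply: lt_trans hs1; exact: ltr01.
have hs : s != 0 by exact: lt0r_neq0.
have hss : s * s - 1 != 0.
  have : 0 < s * s - 1 by nra.
  exact: lt0r_neq0.
have hd : s - s^-1 != 0.
  have -> : s - s^-1 = (s * s - 1) / s by field.
  by rewrite mulf_neq0 // invr_neq0.
pose t : R := v * s^-1^+4.
pose u : R := t / (s - s^-1).
have hud : u * (s - s^-1) = t by rewrite /u divfK.
have e2 : Rinv (pow s 2) = s^-1^+2 by rewrite RinvE RpowE exprVn.
have hP : rileyP s t = 0.
  by rewrite /t (P_bridge s v hs) -e2 hP0 mulr0.
have hl : lred s t = Rpower s q.
  by rewrite /t (l_bridge s v hs) -e2 -RpowE -RmultE.
have l_pos : 0 < lred s t.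
  by rewrite hl; apply/RltP; apply: exp_pos.
have hl_nz : lred s t != 0 by exact: lt0r_neq0.
exists (mk s 0 0 s^-1), (mk (s-u) ((s - s^-1)-u) u (s^-1+u)).
split.
- split.
  + by rewrite /in_SL2 mk_det; exact: dA s hs.
  + by rewrite /in_SL2 mk_det; exact: dB s u hs.
  + have := rel s u hs.
    by rewrite hud hP !mulr0 oppr0 mk_zero addr0.
  + have hdet := det_L s u hs.
    rewrite (L_eq s u hs hss) hud hP !mulr0 !addr0 mk_det in hdet.
    rewrite (L_eq s u hs hss) hud hP !mulr0 !addr0.
    set X := (_ * s^+4).
    set l := lred s t in hdet l_pos hl_nz hl *.
    have hX : X = l^-1.
      apply: (mulfI hl_nz). rewrite mulfV //. by rewrite -hdet mulr0 subr0.
    rewrite hX (diag_exprz s (numq r) hs) (diag_exprz l (denq r) hl_nz) mk_mul.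
    have key : s ^ numq r * l ^ denq r = 1.
      rewrite (Rpower_exprz s (numq r) s_pos) (Rpower_exprz l (denq r) l_pos) hl.
      have hsR : Rlt 0 s by apply/RltP.
      rewrite Rpower_mult.
      have hz : Rplus (numq r)%:~R (Rmult q (denq r)%:~R) = 0.
        rewrite RplusE RmultE /q /ratr.
        have hden : (denq r)%:~R != 0 :> R by rewrite intr_eq0 denq_neq0.
        field. exact: hden.
      have hpl := Rpower_plus ((numq r)%:~R) (Rmult q (denq r)%:~R) s.
      rewrite hz (Rpower_O s hsR) in hpl.
      exact: (esym hpl).
    rewrite -mk_one; apply: mk_eq.
    * by rewrite mulr0 addr0.
    * by rewrite mulr0 mul0r addr0.
    * by rewrite mulr0 mul0r addr0.
    * by rewrite mul0r add0r -invfM key invr1.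
- rewrite /nonabelian_rep !mk_mul.
  apply/eqP => /mk_inj [_ h01 h10 _].
  have e : u * (s - s^-1) = 0.
    have e' : u * (s - s^-1) = (u * s + (s^-1 + u) * 0) - (0 * (s - u) + s^-1 * u) by ring.
    by rewrite e' -h10 subrr.
  move/eqP: e; rewrite mulf_eq0 (negbTE hd) orbF => /eqP hu0.
  rewrite hu0 in h01.
  have e3 : (s - s^-1) * (s - s^-1) = (s * (s - s^-1 - 0) + 0 * (s^-1 + 0)) - ((s - 0) * 0 + (s - s^-1 - 0) * s^-1) by ring.
  rewrite h01 subrr in e3.
  move/eqP: e3; rewrite mulf_eq0 (negbTE hd) orbF => /eqP.
  move/eqP: hd; done.
Qed.
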